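(* On the six equivalence classes of type A faces $[F_{L_0}],[F_{L_1}],[F_{L_2}],[F_{L_3}],[F_{L_4}],[F_0]$, the relation $\Subset$ is exactly the reflexive–transitive closure of $F_{L_1}\Subset F_{L_0}$, $F_{L_2}\Subset F_{L_0}$, $F_{L_3}\Subset F_{L_1}$, $F_{L_3}\Subset F_{L_2}$, $F_{L_4}\Subset F_{L_2}$, $F_0\Subset F_{L_3}$, $F_0\Subset F_{L_4}$. In particular $F_{L_1},F_{L_2}$ are incomparable, $F_{L_3},F_{L_4}$ are incomparable, and $F_{L_4}\not\Subset F_{L_1}$.
   Context: $H_k\subseteq\mathbb R[x,y,z]$: real ternary forms of degree $k$; $P_{3,4}=\{f\in H_4: f\ge0\text{ on }\mathbb P^2(\mathbb R)\}$. $GL_3(\mathbb R)$ acts on forms by $(\sigma f)(a)=f(\sigma^{-1}a)$. For faces $F,G$ of $P_{3,4}$, $[F]\Subset[G]$ means there is $\sigma\in GL_3(\mathbb R)$ with $F\subseteq\sigma(G)$. For a real line $l'$ (identified with a defining linear form) and a projective linear subspace $U\subseteq\mathbb P^2(\mathbb R)$ (possibly empty), $F_{(l',U)}=\{l'^2g: g\in H_2,\ g\ge0\text{ on }\mathbb P^2(\mathbb R),\ g|_U=0\}$. Fix distinct real lines $l,k$, a point $p\in l$, and $q\in\mathbb P^2(\mathbb R)\setminus l$: $F_{L_0}=F_{(l,\emptyset)}$, $F_{L_1}=F_{(l,\{q\})}$, $F_{L_2}=F_{(l,\{p\})}$, $F_{L_3}=F_{(l,k)}$, $F_{L_4}=F_{(l,l)}$,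 $F_0=\{0\}$. *)

(* Defs.v *)
From Stdlib Require Import Reals Relations.
Open Scope R_scope.

(** Vectors of R^3 (homogeneous coordinates of P^2(R)). *)
Definition vec : Type := (R * R * R)%type.
Definition vx (a : vec) : R := fst (fst a).
Definition vy (a : vec) : R := snd (fst a).
Definition vz (a : vec) : R := snd a.
Definition vzero : vec := (0, 0, 0).
Definition vscal (t : R) (a : vec) : vec := (t * vx a, t * vy a, t * vz a).

(** A linear form, given by its coefficient vector; a real line of P^2(R)
    is identified with a nonzero linear form. *)
Definition lin (l : vec) (a : vec) : R := vx l * vx a + vy l * vy a + vz l * vz a.

(** Ternary forms are represented by their polynomial functions R^3 -> R
    (over the infinite field R a form is determined by its function). *)
Definition form : Type := vec -> R.

Definition is_form (d : nat) (f : form) : Prop :=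
  exists c : nat -> nat -> R,
    forall x y z : R,
      f (x, y, z) =
      sum_f_R0 (fun i => sum_f_R0 (fun j => c i j * x ^ i * y ^ j * z ^ (d - i - j)) (d - i)) d.

Definition linmap (s : vec -> vec) : Prop :=
  exists r1 r2 r3 : vec, forall a, s a = (lin r1 a, lin r2 a, lin r3 a).

(** Action of sigma (with inverse sinv) on forms: (sigma f)(a) = f(sigma^{-1} a). *)
Definition act (sinv : vec -> vec) (f : form) : form := fun a => f (sinv a).

(** [F ⋐ G]: exists sigma in GL_3(R) with F ⊆ sigma(G). Elements of GL_3(R) are
    the linear bijections of R^3; sinv is the inverse of sigma. *)
Definition face_sub (F G : form -> Prop) : Prop :=
  exists s sinv : vec -> vec,
    linmap s /\ linmap sinv /\ (forall a, s (sinv a) = a) /\ (forall a, sinv (s a) = a) /\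
    (forall f, F f -> exists g, G g /\ f = act sinv g).

(** F_{(l',U)} = { l'^2 g : g in H_2, g >= 0 on P^2(R), g|_U = 0 }, where U is
    given by its cone in R^3 (the set of vectors representing points of U). *)
Definition faceLU (l' : vec) (U : vec -> Prop) : form -> Prop :=
  fun f => exists g : form,
    is_form 2 g /\ (forall a, 0 <= g a) /\ (forall a, U a -> g a = 0) /\
    f = (fun a => (lin l' a) ^ 2 * g a).

Definition U_empty : vec -> Prop := fun _ => False.
Definition U_point (q : vec) : vec -> Prop := fun a => exists t, a = vscal t q.
Definition U_line (k : vec) : vec -> Prop := fun a => lin k a = 0.

Definition face0 : form -> Prop := fun f => f = (fun _ => 0).

Inductive faceA : Type := L0 | L1 | L2 | L3 | L4 | Fzero.

Definition faceA_of (l k p q : vec) (i : faceA) : form -> Prop :=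
  match i with
  | L0 => faceLU l U_empty
  | L1 => faceLU l (U_point q)
  | L2 => faceLU l (U_point p)
  | L3 => faceLU l (U_line k)
  | L4 => faceLU l (U_line l)
  | Fzero => face0
  end.

Definition genA (i j : faceA) : Prop :=
  match i, j with
  | L1, L0 | L2, L0 | L3, L1 | L3, L2 | L4, L2 | Fzero, L3 | Fzero, L4 => True
  | _, _ => False
  end.

(* Main.v *)
Require Import Defs.
From Stdlib Require Import Reals Relations Lra Lia Psatz Nsatz FunctionalExtensionality Classical.
Open Scope R_scope.

Definition cross (u v : vec) : vec :=
  (vy u * vz v - vz u * vy v, vz u * vx v - vx u * vz v, vx u * vy v - vy u * vx v).
Definition vadd (u v : vec) : vec := (vx u + vx v, vy u + vy v, vz u + vz v).
Definition nsq (u : vec) : R := lin u u.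

Ltac vsimpl := unfold nsq, lin, vscal, vadd, cross, vzero in *; unfold vx, vy, vz in *; simpl in *.
Ltac vdes u := let a := fresh "a" in let b := fresh "b" in let c := fresh "c" in destruct u as [[a b] c].

Lemma veq (a b : vec) : vx a = vx b -> vy a = vy b -> vz a = vz b -> a = b.
Proof. vdes a; vdes b; vsimpl; intros; subst; reflexivity. Qed.

Lemma nsq_pos u : u <> vzero -> 0 < nsq u.
Proof.
  intros H. vdes u. vsimpl.
  destruct (Rle_lt_dec (a*a+b*b+c*c) 0) as [h|h]; [|lra].
  exfalso; apply H. assert (a = 0) by nra. assert (b=0) by nra. assert (c=0) by nra. subst; reflexivity.
Qed.

Lemma nz_of_lin u b : lin u b <> 0 -> b <> vzero.
Proof. intros H E; subst; apply H; vdes u; unfold lin, vzero, vx, vy, vz; simpl; ring. Qed.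

Lemma lin_vadd u a b : lin u (vadd a b) = lin u a + lin u b.
Proof. vdes u; vdes a; vdes b; vsimpl; ring. Qed.
Lemma lin_vscal u t a : lin u (vscal t a) = t * lin u a.
Proof. vdes u; vdes a; vsimpl; ring. Qed.
Lemma lin_vscall u t a : lin (vscal t u) a = t * lin u a.
Proof. vdes u; vdes a; vsimpl; ring. Qed.
Lemma lin_comm u a : lin u a = lin a u.
Proof. vdes u; vdes a; vsimpl; ring. Qed.
Lemma lin_zero u : lin u vzero = 0.
Proof. vdes u; vsimpl; ring. Qed.
Lemma lin_cross1 u v : lin u (cross u v) = 0.
Proof. vdes u; vdes v; vsimpl; ring. Qed.
Lemma lin_cross2 u v : lin v (cross u v) = 0.
Proof. vdes u; vdes v; vsimpl; ring. Qed.
Lemma triple u v : lin u (cross v (cross u v)) = nsq (cross u v).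
Proof. vdes u; vdes v; vsimpl; ring. Qed.
Lemma lagrange a b : nsq (cross a b) = nsq a * nsq b - (lin a b)^2.
Proof. vdes a; vdes b; vsimpl; ring. Qed.
Lemma cross_self a : cross a a = vzero.
Proof. vdes a; apply veq; vsimpl; ring. Qed.
Lemma cross_scal a t b : cross (vscal t a) b = vscal t (cross a b).
Proof. vdes a; vdes b; apply veq; vsimpl; ring. Qed.
Lemma nsq_scal t a : nsq (vscal t a) = t^2 * nsq a.
Proof. vdes a; vsimpl; ring. Qed.
Lemma nsq_zero : nsq vzero = 0.
Proof. vsimpl; ring. Qed.

Lemma par u v : u <> vzero -> cross u v = vzero -> v = vscal (lin u v / nsq u) u.
Proof.
  intros Hu Hc. pose proof (nsq_pos u Hu) as Hn.
  vdes u; vdes v. unfold cross, vzero in Hc; simpl in Hc. injection Hc as e1 e2 e3.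
  unfold nsq, lin in Hn; simpl in Hn.
  apply veq; vsimpl; (field_simplify_eq; [apply Rminus_diag_uniq | nra]).
  - transitivity (- b * (a * b0 - b * a0) + c * (c * a0 - a * c0)); [ring| rewrite e3, e2; ring].
  - transitivity (a * (a * b0 - b * a0) - c * (b * c0 - c * b0)); [ring| rewrite e3, e1; ring].
  - transitivity (- a * (c * a0 - a * c0) + b * (b * c0 - c * b0)); [ring| rewrite e2, e1; ring].
Qed.

Lemma par' w p : p <> vzero -> cross w p = vzero -> exists t, w = vscal t p.
Proof.
  intros Hp Hc. exists (lin p w / nsq p). apply par; auto.
  vdes w; vdes p. unfold cross, vzero in *; simpl in *. injection Hc as e1 e2 e3.
  apply veq; vsimpl; lra.
Qed.

Definition qpoly (A B C D E F x y z : R) : R :=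
  A*x^2+B*y^2+C*z^2+D*x*y+E*x*z+F*y*z.

Lemma form2_poly f : is_form 2 f -> exists A B C D E F, forall x y z,
  f (x,y,z) = qpoly A B C D E F x y z.
Proof.
  intros [c Hc]. exists (c 2%nat 0%nat), (c 0%nat 2%nat), (c 0%nat 0%nat), (c 1%nat 1%nat), (c 1%nat 0%nat), (c 0%nat 1%nat).
  intros; rewrite Hc; unfold qpoly; simpl; ring.
Qed.

Lemma poly_form2 f A B C D E F : (forall x y z, f (x,y,z) = qpoly A B C D E F x y z) -> is_form 2 f.
Proof.
  intros H. exists (fun i j => match i, j with
    | 2%nat, 0%nat => A | 0%nat, 2%nat => B | 0%nat, 0%nat => C
    | 1%nat, 1%nat => D | 1%nat, 0%nat => E | 0%nat, 1%nat => F | _, _ => 0 end).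
  intros; rewrite H; unfold qpoly; simpl; ring.
Qed.

Lemma linmap_rows s : linmap s -> exists r1 r2 r3 : vec, forall a, s a = (lin r1 a, lin r2 a, lin r3 a).
Proof. auto. Qed.

Lemma form2_comp h s : is_form 2 h -> linmap s -> is_form 2 (fun a => h (s a)).
Proof.
  intros Hh [r1 [r2 [r3 Hs]]]. destruct (form2_poly h Hh) as (A & B & C & D & E & F & HP).
  apply (poly_form2 _ (h (s (1,0,0))) (h (s (0,1,0))) (h (s (0,0,1)))
     (h (s (1,1,0)) - h (s (1,0,0)) - h (s (0,1,0)))
     (h (s (1,0,1)) - h (s (1,0,0)) - h (s (0,0,1)))
     (h (s (0,1,1)) - h (s (0,1,0)) - h (s (0,0,1)))).
  intros x y z. rewrite !Hs, !HP. vdes r1; vdes r2; vdes r3. unfold qpoly; vsimpl. ring.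
Qed.

Lemma form2_expand f a b t : is_form 2 f ->
  f (vadd a (vscal t b)) = f a + t * (f (vadd a b) - f a - f b) + t^2 * f b.
Proof.
  intros Hf. destruct (form2_poly f Hf) as (A & B & C & D & E & F & HP).
  vdes a; vdes b. unfold vadd, vscal, vx, vy, vz; simpl. rewrite !HP. unfold qpoly. ring.
Qed.

Lemma form2_quad3 f a b : is_form 2 f ->
  f a = f (vadd a b) + f (vadd a (vscal (-1) b)) / 3 - f (vadd a (vscal 2 b)) / 3.
Proof.
  intros Hf. destruct (form2_poly f Hf) as (A & B & C & D & E & F & HP).
  vdes a; vdes b. unfold vadd, vscal, vx, vy, vz; simpl. rewrite !HP. unfold qpoly. field.
Qed.

Lemma form2_zero f : is_form 2 f -> f vzero = 0.
Proof.
  intros Hf. destruct (form2_poly f Hf) as (A & B & C & D & E & F & HP).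
  unfold vzero; rewrite HP; unfold qpoly; ring.
Qed.

Lemma form2_scal f t a : is_form 2 f -> f (vscal t a) = t^2 * f a.
Proof.
  intros Hf. destruct (form2_poly f Hf) as (A & B & C & D & E & F & HP).
  vdes a; unfold vscal, vx, vy, vz; simpl; rewrite !HP; unfold qpoly; ring.
Qed.

Lemma form2_nsq : is_form 2 nsq.
Proof. apply (poly_form2 _ 1 1 1 0 0 0). intros; vsimpl; unfold qpoly; ring. Qed.

Lemma form2_gl l : is_form 2 (fun a => lin l a ^ 2).
Proof.
  vdes l. apply (poly_form2 _ (a*a) (b*b) (c*c) (2*a*b) (2*a*c) (2*b*c)).
  intros; vsimpl; unfold qpoly; ring.
Qed.

Lemma form2_gcr q : is_form 2 (fun a => nsq (cross a q)).
Proof.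
  intros. apply (form2_comp nsq (fun a => cross a q)). apply form2_nsq.
  vdes q. exists (0, c, -b), (-c, 0, a), (b, -a, 0). intros; vdes a0; apply veq; vsimpl; ring.
Qed.

Lemma linmap_add s a b : linmap s -> s (vadd a b) = vadd (s a) (s b).
Proof. intros [r1 [r2 [r3 H]]]. rewrite !H. vdes a; vdes b; vdes r1; vdes r2; vdes r3; apply veq; vsimpl; ring. Qed.
Lemma linmap_scal s t a : linmap s -> s (vscal t a) = vscal t (s a).
Proof. intros [r1 [r2 [r3 H]]]. rewrite !H. vdes a; vdes r1; vdes r2; vdes r3; apply veq; vsimpl; ring. Qed.
Lemma linmap_zero s : linmap s -> s vzero = vzero.
Proof. intros [r1 [r2 [r3 H]]]. rewrite !H. vdes r1; vdes r2; vdes r3; apply veq; vsimpl; ring. Qed.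

Lemma lin_pull l sinv : linmap sinv -> exists l', forall a, lin l (sinv a) = lin l' a.
Proof.
  intros [r1 [r2 [r3 H]]].
  exists (vadd (vadd (vscal (vx l) r1) (vscal (vy l) r2)) (vscal (vz l) r3)).
  intros a; rewrite H. vdes a; vdes l; vdes r1; vdes r2; vdes r3; vsimpl; ring.
Qed.

Lemma linmap_id : linmap (fun a => a).
Proof. exists (1,0,0), (0,1,0), (0,0,1). intros a; vdes a; apply veq; vsimpl; ring. Qed.

Definition shear (w d : vec) (a : vec) : vec := vadd a (vscal (lin w a) d).

Lemma linmap_shear w d : linmap (shear w d).
Proof.
  vdes w; vdes d. exists (1 + a0 * a, a0 * b, a0 * c), (b0 * a, 1 + b0*b, b0*c), (c0*a, c0*b, 1 + c0*c).
  intros x; vdes x; unfold shear; apply veq; vsimpl; ring.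
Qed.

Lemma shear_inv w d a : lin w d = 0 -> shear w d (shear (vscal (-1) w) d a) = a.
Proof.
  intros H. unfold shear. rewrite lin_vadd, lin_vscal, H, lin_vscall.
  vdes w; vdes d; vdes a; apply veq; vsimpl; ring.
Qed.

Lemma neg_core (l : vec) (g h : form) s sinv :
  linmap s -> linmap sinv -> (forall a, s (sinv a) = a) -> (forall a, sinv (s a) = a) ->
  l <> vzero -> is_form 2 g -> is_form 2 h ->
  (forall l', cross l l' <> vzero -> exists b, lin l' b = 0 /\ lin l b <> 0 /\ g b <> 0) ->
  (forall a, lin l a ^ 2 * g a = lin l (sinv a) ^ 2 * h (sinv a)) ->
  exists c, c <> 0 /\ (forall b, lin l b = c * lin l (s b)) /\ (forall b, g (s b) = c ^ 2 * h b).
Proof.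
  intros Hs Hsi H1 H2 Hl Hg Hh Hpt Heq.
  destruct (lin_pull l sinv Hsi) as [l' HL].
  destruct (classic (cross l l' = vzero)) as [Hc|Hc].
  2:{ exfalso. destruct (Hpt l' Hc) as (b & hb1 & hb2 & hb3).
      specialize (Heq b). rewrite HL, hb1 in Heq.
      assert (lin l b ^ 2 * g b <> 0) by (apply Rmult_integral_contrapositive; split; [apply pow_nonzero|]; auto).
      apply H. rewrite Heq; ring. }
  pose proof (par l l' Hl Hc) as E. set (c := lin l l' / nsq l) in E.
  assert (HLc : forall a, lin l (sinv a) = c * lin l a).
  { intros a. rewrite HL, E, lin_vscall. reflexivity. }
  pose proof (nsq_pos l Hl) as Hn.
  assert (Hc0 : c <> 0).
  { intros C. specialize (HLc (s l)). rewrite H2, C in HLc. unfold nsq in Hn. lra. }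
  assert (Hk1 : forall a, lin l a <> 0 -> g a = c ^ 2 * h (sinv a)).
  { intros a Ha. specialize (Heq a). rewrite HLc in Heq.
    apply (Rmult_eq_reg_l (lin l a ^ 2)); [|apply pow_nonzero; auto]. rewrite Heq; ring. }
  assert (Hk : forall a, g a = c ^ 2 * h (sinv a)).
  { intros a. destruct (Req_dec (lin l a) 0) as [Ha|Ha]; [|apply Hk1; auto].
    pose proof (form2_comp h sinv Hh Hsi) as Hhs.
    rewrite (form2_quad3 g a l Hg), (form2_quad3 _ a l Hhs).
    rewrite !Hk1. cbv beta. field. all: rewrite lin_vadd, ?lin_vscal, Ha; unfold nsq in Hn; lra. }
  exists c. split; [auto|split].
  - intros b. rewrite <- HLc, H2. reflexivity.
  - intros b. rewrite Hk, H2. reflexivity.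
Qed.

Lemma Hg_nsq l : forall l', cross l l' <> vzero -> exists b, lin l' b = 0 /\ lin l b <> 0 /\ nsq b <> 0.
Proof.
  intros l' Hc. exists (cross l' (cross l l')). pose proof (nsq_pos _ Hc).
  assert (lin l (cross l' (cross l l')) <> 0) by (rewrite triple; lra).
  split; [apply lin_cross1|split; auto].
  pose proof (nsq_pos _ (nz_of_lin _ _ H0)). lra.
Qed.

Lemma Hg_gl l : forall l', cross l l' <> vzero -> exists b, lin l' b = 0 /\ lin l b <> 0 /\ lin l b ^ 2 <> 0.
Proof.
  intros l' Hc. exists (cross l' (cross l l')). pose proof (nsq_pos _ Hc).
  assert (lin l (cross l' (cross l l')) <> 0) by (rewrite triple; lra).
  split; [apply lin_cross1|split; auto]. apply pow_nonzero; auto.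
Qed.

Lemma cross_anti a b : cross a b = vscal (-1) (cross b a).
Proof. vdes a; vdes b; apply veq; vsimpl; ring. Qed.

Lemma cross_zero_sym a b : cross a b = vzero -> cross b a = vzero.
Proof. intros H. rewrite cross_anti, H. apply veq; vsimpl; ring. Qed.

Lemma Hg_p l p : p <> vzero -> lin l p = 0 ->
  forall l', cross l l' <> vzero -> exists b, lin l' b = 0 /\ lin l b <> 0 /\ nsq (cross b p) <> 0.
Proof.
  intros Hp Hlp l' Hc. exists (cross l' (cross l l')). pose proof (nsq_pos _ Hc).
  assert (lin l (cross l' (cross l l')) <> 0) by (rewrite triple; lra).
  split; [apply lin_cross1|split; auto].
  destruct (classic (cross (cross l' (cross l l')) p = vzero)) as [E|E].
  - exfalso. destruct (par' _ _ Hp E) as [t Ht]. rewrite Ht, lin_vscal, Hlp in H0. apply H0; ring.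
  - pose proof (nsq_pos _ E). lra.
Qed.

Lemma diff_lem b1 w q t1 t2 : b1 = vscal t1 q -> vadd b1 w = vscal t2 q -> w = vscal (t2 - t1) q.
Proof.
  intros E1 E3. subst. vdes q; vdes w. unfold vadd, vscal, vx, vy, vz in *; simpl in *.
  injection E3 as e1 e2 e3. apply veq; vsimpl; lra.
Qed.

Lemma Hg_q l q : lin l q <> 0 ->
  forall l', cross l l' <> vzero -> exists b, lin l' b = 0 /\ lin l b <> 0 /\ nsq (cross b q) <> 0.
Proof.
  intros Hq l' Hc. set (w := cross l l') in *. set (b1 := cross l' w).
  pose proof (nsq_pos _ Hc).
  assert (Hb1 : lin l b1 = nsq w) by apply triple.
  assert (Hq0 : q <> vzero) by (apply (nz_of_lin l); auto).
  destruct (classic (cross b1 q = vzero)) as [E|E].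
  - exists (vadd b1 w). rewrite !lin_vadd, Hb1. unfold b1, w. rewrite lin_cross1, lin_cross2, lin_cross1.
    split; [ring|split; [fold w; lra|]].
    destruct (classic (cross (vadd b1 w) q = vzero)) as [E2|E2].
    + exfalso. destruct (par' _ _ Hq0 E) as [t1 E1]. destruct (par' _ _ Hq0 E2) as [t2 E3].
      assert (Hw: w = vscal (t2 - t1) q).
      { apply (diff_lem b1); auto. }
      assert (lin l w = 0) by apply lin_cross1.
      rewrite Hw, lin_vscal in H0. assert (t2 - t1 = 0).
      { apply (Rmult_eq_reg_r (lin l q)); auto. rewrite H0; ring. }
      rewrite H1 in Hw. rewrite Hw, nsq_scal in H. lra.
    + apply not_eq_sym, Rlt_not_eq, nsq_pos; exact E2.
  - exists b1. split; [apply lin_cross1|split; [lra|]]. pose proof (nsq_pos _ E). lra.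
Qed.

Lemma mem_face l U g : is_form 2 g -> (forall a, 0 <= g a) -> (forall u, U u -> g u = 0) ->
  faceLU l U (fun a => lin l a ^ 2 * g a).
Proof. intros; exists g; repeat split; auto. Qed.

Lemma neg_setup l U1 U2 g : l <> vzero -> is_form 2 g -> (forall a, 0 <= g a) -> (forall u, U1 u -> g u = 0) ->
  (forall l', cross l l' <> vzero -> exists b, lin l' b = 0 /\ lin l b <> 0 /\ g b <> 0) ->
  face_sub (faceLU l U1) (faceLU l U2) ->
  exists s sinv c h, linmap s /\ linmap sinv /\ (forall a, s (sinv a) = a) /\ (forall a, sinv (s a) = a) /\
    c <> 0 /\ (forall b, lin l b = c * lin l (s b)) /\ (forall b, g (s b) = c ^ 2 * h b) /\
    (forall u, U2 u -> h u = 0) /\ (forall b, 0 <= h b).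
Proof.
  intros Hl Hg Hgp Hgz Hpt (s & sinv & Hs & Hsi & H1 & H2 & HF).
  destruct (HF _ (mem_face l U1 g Hg Hgp Hgz)) as [g' [(h & Hh & Hhp & Hhz & ->) Ef]].
  assert (Heq : forall a, lin l a ^ 2 * g a = lin l (sinv a) ^ 2 * h (sinv a)).
  { intros a. apply (f_equal (fun F => F a)) in Ef. unfold act in Ef. exact Ef. }
  destruct (neg_core l g h s sinv Hs Hsi H1 H2 Hl Hg Hh Hpt Heq) as (c & Hc & Hc1 & Hc2).
  exists s, sinv, c, h. repeat split; auto.
Qed.

Lemma zero_target l U g : is_form 2 g -> (forall a, 0 <= g a) -> (forall u, U u -> g u = 0) ->
  (exists b, lin l b <> 0 /\ g b <> 0) -> ~ face_sub (faceLU l U) face0.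
Proof.
  intros Hg Hgp Hgz [b [Hb1 Hb2]] (s & sinv & Hs & Hsi & H1 & H2 & HF).
  destruct (HF _ (mem_face l U g Hg Hgp Hgz)) as [g' [Hz Ef]]. unfold face0 in Hz. subst g'.
  apply (f_equal (fun F => F b)) in Ef. unfold act in Ef. simpl in Ef.
  assert (lin l b ^ 2 * g b <> 0) by (apply Rmult_integral_contrapositive; split; [apply pow_nonzero|]; auto).
  auto.
Qed.

Lemma psd_plane l h : l <> vzero -> is_form 2 h -> (forall a, 0 <= h a) ->
  (forall b, lin l b = 0 -> h b = 0) -> forall a, h a = h l / (nsq l) ^ 2 * lin l a ^ 2.
Proof.
  intros Hl Hh Hp Hz.
  assert (Hsh : forall x b, lin l b = 0 -> h (vadd x b) = h x).
  { intros x b Hb. destruct (Req_dec (h (vadd x b) - h x) 0) as [E|E]; [lra|exfalso].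
    set (d := h (vadd x b) - h x) in *.
    pose proof (form2_expand h x b (- (h x + 1) / d) Hh) as HE.
    rewrite (Hz b Hb) in HE. specialize (Hp (vadd x (vscal (- (h x + 1) / d) b))).
    rewrite HE in Hp. fold d in Hp.
    assert (- (h x + 1) / d * (d - 0) = - (h x + 1)) by (field; auto). nra. }
  intros a. pose proof (nsq_pos l Hl) as Hn. set (t := lin l a / nsq l).
  assert (Ea : a = vadd (vscal t l) (vadd a (vscal (- t) l))).
  { vdes a; vdes l; apply veq; vsimpl; ring. }
  rewrite Ea at 1. rewrite Hsh.
  - rewrite form2_scal by auto. unfold t. field. lra.
  - rewrite lin_vadd, lin_vscal. unfold t. unfold nsq in *. field. lra.
Qed.

Lemma pos_core l U1 U2 s sinv : linmap s -> linmap sinv -> (forall a, s (sinv a) = a) ->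
  (forall a, sinv (s a) = a) -> (forall a, lin l (sinv a) = lin l a) ->
  (forall g, is_form 2 g -> (forall a, 0 <= g a) -> (forall u, U1 u -> g u = 0) -> forall u, U2 u -> g (s u) = 0) ->
  face_sub (faceLU l U1) (faceLU l U2).
Proof.
  intros Hs Hsi H1 H2 HL HU. exists s, sinv. repeat split; auto.
  intros f (g & Hg & Hp & Hz & ->). exists (fun a => lin l a ^ 2 * g (s a)). split.
  - exists (fun a => g (s a)). repeat split; auto. apply form2_comp; auto.
  - unfold act. apply functional_extensionality. intros a. rewrite HL, H1. reflexivity.
Qed.

Lemma pos_id l U1 U2 : (forall u, U2 u -> U1 u) -> face_sub (faceLU l U1) (faceLU l U2).
Proof.
  intros H. apply (pos_core l U1 U2 (fun a => a) (fun a => a)); auto using linmap_id.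
Qed.

Lemma zero_src l U : face_sub face0 (faceLU l U).
Proof.
  exists (fun a => a), (fun a => a). repeat split; auto using linmap_id.
  intros f Hf. unfold face0 in Hf. subst. exists (fun a => lin l a ^ 2 * 0). split.
  - exists (fun _ => 0). repeat split; auto using Rle_refl.
    apply (poly_form2 _ 0 0 0 0 0 0). intros; unfold qpoly; ring.
  - unfold act. apply functional_extensionality. intros; ring.
Qed.

Lemma refl_sub F : face_sub F F.
Proof.
  exists (fun a => a), (fun a => a). repeat split; auto using linmap_id.
  intros f Hf. exists f. split; auto.
Qed.

Lemma nsq_ge0 a : 0 <= nsq a.
Proof. vdes a; vsimpl; nra. Qed.

Lemma nsq0 u : nsq u = 0 -> u = vzero.
Proof. intros H. destruct (classic (u = vzero)) as [E|E]; auto. pose proof (nsq_pos u E); lra. Qed.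

Lemma s_zero s sinv u : linmap sinv -> (forall a, sinv (s a) = a) -> s u = vzero -> u = vzero.
Proof. intros Hsi H2 E. rewrite <- (H2 u), E. apply linmap_zero; auto. Qed.

Lemma upt q : U_point q q.
Proof. exists 1. vdes q; apply veq; vsimpl; ring. Qed.

Lemma gcr_vanish q u : U_point q u -> nsq (cross u q) = 0.
Proof. intros [t ->]. vdes q; vsimpl; ring. Qed.

Lemma clk l k : l <> vzero -> ~ (exists c, k = vscal c l) -> cross l k <> vzero.
Proof. intros Hl H E. apply H. eexists. apply par; auto. Qed.

Lemma pow4_0 x : x ^ 4 = 0 -> x = 0.
Proof. intros H. destruct (Req_dec x 0); auto. exfalso; apply (pow_nonzero x 4); auto. Qed.

Lemma sq0 x : x ^ 2 = 0 -> x = 0.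
Proof. intros; nra. Qed.

Lemma kill_q l q s sinv c u : linmap sinv -> (forall a, sinv (s a) = a) -> c <> 0 ->
  (forall b, lin l b = c * lin l (s b)) -> lin l q <> 0 -> cross (s u) q = vzero -> lin l u = 0 -> u = vzero.
Proof.
  intros Hsi H2 Hc Hc1 Hq E Hu. assert (Hq0 : q <> vzero) by (apply (nz_of_lin l); auto).
  destruct (par' _ _ Hq0 E) as [t Ht]. rewrite Hc1, Ht, lin_vscal in Hu.
  assert (t = 0).
  { destruct (Req_dec t 0); auto. exfalso. apply Rmult_integral in Hu. destruct Hu; [auto|].
    apply Rmult_integral in H0; destruct H0; auto. }
  subst t. apply (s_zero s sinv); auto. rewrite Ht. vdes q; apply veq; vsimpl; ring.
Qed.

Lemma kill_p l p s c u : p <> vzero -> (forall b, lin l b = c * lin l (s b)) -> lin l p = 0 ->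
  cross (s u) p = vzero -> lin l u = 0.
Proof.
  intros Hp Hc1 Hlp E. destruct (par' _ _ Hp E) as [t Ht]. rewrite Hc1, Ht, lin_vscal, Hlp. ring.
Qed.

Lemma gl_ge0 l a : 0 <= lin l a ^ 2.
Proof. nra. Qed.

Ltac negset l H g Hf Hge Hvan Hpt :=
  let s := fresh "s" in let sinv := fresh "sinv" in let c := fresh "c" in let h := fresh "h" in
  destruct (neg_setup l _ _ g ltac:(assumption) Hf Hge Hvan Hpt H)
    as (s & sinv & c & h & ?Hs & ?Hsi & ?H1 & ?H2 & ?Hc & ?Hc1 & ?Hc2 & ?Hz & ?Hhp).

Lemma N0_pt l U u : l <> vzero -> U u -> u <> vzero -> ~ face_sub (faceLU l U_empty) (faceLU l U).
Proof.
  intros Hl Hu Hu0 H.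
  negset l H nsq form2_nsq nsq_ge0 (fun (u : vec) (h : U_empty u) => False_ind (nsq u = 0) h) (Hg_nsq l).
  apply Hu0. apply (s_zero s sinv); auto. apply nsq0. rewrite Hc2, Hz; auto; ring.
Qed.

Lemma N1_pt l q U u : l <> vzero -> lin l q <> 0 -> U u -> u <> vzero -> lin l u = 0 ->
  ~ face_sub (faceLU l (U_point q)) (faceLU l U).
Proof.
  intros Hl Hq Hu Hu0 Hlu H.
  negset l H (fun a => nsq (cross a q)) (form2_gcr q) (fun a => nsq_ge0 (cross a q)) (gcr_vanish q) (Hg_q l q Hq).
  apply Hu0. apply (kill_q l q s sinv c); auto. apply nsq0. rewrite Hc2, Hz; auto; ring.
Qed.

Lemma N2_pt l p U u : l <> vzero -> p <> vzero -> lin l p = 0 -> U u -> lin l u <> 0 ->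
  ~ face_sub (faceLU l (U_point p)) (faceLU l U).
Proof.
  intros Hl Hp Hlp Hu Hlu H.
  negset l H (fun a => nsq (cross a p)) (form2_gcr p) (fun a => nsq_ge0 (cross a p)) (gcr_vanish p) (Hg_p l p Hp Hlp).
  apply Hlu. apply (kill_p l p s c); auto. apply nsq0. rewrite Hc2, Hz; auto; ring.
Qed.

Lemma N24 l k p : l <> vzero -> ~ (exists c, k = vscal c l) -> p <> vzero -> lin l p = 0 ->
  ~ face_sub (faceLU l (U_point p)) (faceLU l (U_line l)).
Proof.
  intros Hl Hlk Hp Hlp H.
  negset l H (fun a => nsq (cross a p)) (form2_gcr p) (fun a => nsq_ge0 (cross a p)) (gcr_vanish p) (Hg_p l p Hp Hlp).
  set (u1 := cross l k). set (u2 := cross l u1).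
  assert (Hu1 : u1 <> vzero) by (apply clk; auto).
  assert (E1 : cross (s u1) p = vzero) by (apply nsq0; rewrite Hc2, Hz; [ring| unfold U_line, u1; apply lin_cross1]).
  assert (E2 : cross (s u2) p = vzero) by (apply nsq0; rewrite Hc2, Hz; [ring| unfold U_line, u2; apply lin_cross1]).
  destruct (par' _ _ Hp E1) as [t1 T1]. destruct (par' _ _ Hp E2) as [t2 T2].
  assert (F1 : u1 = vscal t1 (sinv p)) by (rewrite <- (H2 u1), T1; apply linmap_scal; auto).
  assert (F2 : u2 = vscal t2 (sinv p)) by (rewrite <- (H2 u2), T2; apply linmap_scal; auto).
  assert (D : lin u1 u2 = 0) by (unfold u2; apply lin_cross2).
  pose proof (nsq_pos _ Hu1) as P1. pose proof (nsq_pos _ Hl) as Pl.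
  assert (P2 : 0 < nsq u2) by (unfold u2; rewrite lagrange; replace (lin l u1) with 0 by (unfold u1; symmetry; apply lin_cross1); nra).
  rewrite F1, F2, lin_vscal, lin_vscall in D. rewrite F1, nsq_scal in P1. rewrite F2, nsq_scal in P2.
  unfold nsq in *. nra.
Qed.

Lemma N34 l k : l <> vzero -> ~ (exists c, k = vscal c l) ->
  ~ face_sub (faceLU l (U_line k)) (faceLU l (U_line l)).
Proof.
  intros Hl Hlk (s & sinv & Hs & Hsi & H1 & H2 & HF).
  assert (Hm : faceLU l (U_line k) (fun a => lin l a ^ 2 * lin k a ^ 2)).
  { apply mem_face; [apply form2_gl| intros; apply gl_ge0| intros u Hu; unfold U_line in Hu; rewrite Hu; ring]. }
  destruct (HF _ Hm) as [g' [(h & Hh & Hhp & Hhz & ->) Ef]].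
  assert (Heq : forall a, lin l a ^ 2 * lin k a ^ 2 = lin l (sinv a) ^ 2 * h (sinv a)).
  { intros a. apply (f_equal (fun F => F a)) in Ef. unfold act in Ef. exact Ef. }
  pose proof (psd_plane l h Hl Hh Hhp Hhz) as Hpl. set (C := h l / nsq l ^ 2) in Hpl.
  destruct (lin_pull l sinv Hsi) as [l' HL].
  assert (Heq2 : forall a, lin l a ^ 2 * lin k a ^ 2 = C * lin l' a ^ 4).
  { intros a. rewrite Heq, Hpl, HL. ring. }
  pose proof (clk l k Hl Hlk) as Hc. assert (Hc' : cross k l <> vzero).
  { intros E; apply Hc. rewrite cross_anti, E. apply veq; vsimpl; ring. }
  set (bk := cross k (cross l k)). set (bl := cross l (cross k l)).
  assert (A1 : lin k bk = 0) by apply lin_cross1. assert (A2 : lin l bk = nsq (cross l k)) by apply triple.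
  assert (A3 : lin l bl = 0) by apply lin_cross1. assert (A4 : lin k bl = nsq (cross k l)) by apply triple.
  pose proof (nsq_pos _ Hc). pose proof (nsq_pos _ Hc').
  pose proof (Heq2 bk) as e1. pose proof (Heq2 bl) as e2. pose proof (Heq2 (vadd bk bl)) as e3.
  rewrite A1 in e1. rewrite A3 in e2. rewrite !lin_vadd, A1, A2, A3, A4 in e3.
  destruct (Req_dec C 0) as [C0|C0].
  - rewrite C0 in e3. assert (nsq (cross l k) ^ 2 * nsq (cross k l) ^ 2 > 0).
    { apply Rmult_lt_0_compat; apply pow_lt; lra. }
    replace (nsq (cross l k) + 0) with (nsq (cross l k)) in e3 by ring.
    replace (0 + nsq (cross k l)) with (nsq (cross k l)) in e3 by ring. lra.
  - assert (Z1 : lin l' bk = 0).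
    { apply pow4_0. apply (Rmult_eq_reg_l C); auto. rewrite <- e1; ring. }
    assert (Z2 : lin l' bl = 0).
    { apply pow4_0. apply (Rmult_eq_reg_l C); auto. rewrite <- e2; ring. }
    rewrite Z1, Z2 in e3. assert (nsq (cross l k) ^ 2 * nsq (cross k l) ^ 2 > 0).
    { apply Rmult_lt_0_compat; apply pow_lt; lra. }
    replace (nsq (cross l k) + 0) with (nsq (cross l k)) in e3 by ring.
    replace (0 + nsq (cross k l)) with (nsq (cross k l)) in e3 by ring. lra.
Qed.

Lemma N4_pt l U u : l <> vzero -> U u -> lin l u <> 0 -> ~ face_sub (faceLU l (U_line l)) (faceLU l U).
Proof.
  intros Hl Hu Hlu H.
  assert (Hz0 : forall u, U_line l u -> lin l u ^ 2 = 0) by (intros v Hv; unfold U_line in Hv; rewrite Hv; ring).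
  negset l H (fun a => lin l a ^ 2) (form2_gl l) (gl_ge0 l) Hz0 (Hg_gl l).
  apply Hlu. rewrite Hc1. assert (lin l (s u) = 0).
  { apply sq0. rewrite Hc2, Hz; auto; ring. }
  rewrite H0; ring.
Qed.

Lemma vscal_invol a : vscal (-1) (vscal (-1) a) = a.
Proof. vdes a; apply veq; vsimpl; ring. Qed.

Lemma lin_shear l w d a : lin l d = 0 -> lin l (shear w d a) = lin l a.
Proof. intros H. unfold shear. rewrite lin_vadd, lin_vscal, H. ring. Qed.

Lemma pos_shear l U1 U2 w d : lin l d = 0 -> lin w d = 0 ->
  (forall u, U2 u -> U1 (shear w d u)) -> face_sub (faceLU l U1) (faceLU l U2).
Proof.
  intros Hd Hw HU.
  apply (pos_core l U1 U2 (shear w d) (shear (vscal (-1) w) d)); auto using linmap_shear.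
  - intros a. apply shear_inv; auto.
  - intros a. pose proof (shear_inv (vscal (-1) w) d a) as E. rewrite vscal_invol in E. apply E.
    rewrite lin_vscall, Hw; ring.
  - intros a. apply lin_shear; auto.
Qed.

Lemma P31 l k q : l <> vzero -> ~ (exists c, k = vscal c l) -> lin l q <> 0 ->
  face_sub (faceLU l (U_line k)) (faceLU l (U_point q)).
Proof.
  intros Hl Hlk Hq.
  pose proof (clk l k Hl Hlk) as Hc. assert (Hc' : cross k l <> vzero).
  { intros E; apply Hc. rewrite cross_anti, E. apply veq; vsimpl; ring. }
  pose proof (nsq_pos _ Hc') as PN.
  set (bl := cross l (cross k l)).
  assert (A3 : lin l bl = 0) by apply lin_cross1. assert (A4 : lin k bl = nsq (cross k l)) by apply triple.
  set (v := vscal (- lin k q / lin l q / nsq (cross k l)) bl).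
  apply (pos_shear l _ _ l v).
  - unfold v; rewrite lin_vscal, A3; ring.
  - unfold v; rewrite lin_vscal, A3; ring.
  - intros u [t ->]. unfold U_line. rewrite (linmap_scal (shear l v)) by apply linmap_shear.
    rewrite lin_vscal. unfold shear. rewrite lin_vadd, lin_vscal. unfold v. rewrite lin_vscal, A4.
    field. split; lra.
Qed.

Lemma P32 l k p : l <> vzero -> ~ (exists c, k = vscal c l) -> p <> vzero -> lin l p = 0 ->
  face_sub (faceLU l (U_line k)) (faceLU l (U_point p)).
Proof.
  intros Hl Hlk Hp Hlp.
  destruct (Req_dec (lin k p) 0) as [Hkp|Hkp].
  { apply pos_id. intros u [t ->]. unfold U_line. rewrite lin_vscal, Hkp; ring. }
  pose proof (clk l k Hl Hlk) as Hc.
  set (u0 := cross l k). set (d := vadd p u0). set (X := cross p d).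
  assert (Hku0 : lin k u0 = 0) by apply lin_cross2.
  assert (Hlu0 : lin l u0 = 0) by apply lin_cross1.
  assert (HX : X <> vzero).
  { intros E. apply cross_zero_sym in E. destruct (par' _ _ Hp E) as [t Ht].
    assert (t = 1).
    { assert (lin k d = t * lin k p) by (rewrite Ht, lin_vscal; ring).
      unfold d in H; rewrite lin_vadd, Hku0 in H. apply (Rmult_eq_reg_r (lin k p)); auto. lra. }
    subst t. assert (E1 : p = vscal 1 p) by (vdes p; apply veq; vsimpl; ring).
    pose proof (diff_lem p u0 p 1 1 E1 Ht) as E2. apply Hc. fold u0. rewrite E2.
    vdes p; apply veq; vsimpl; ring. }
  pose proof (nsq_pos _ HX) as PX.
  set (w := vscal (-1 / nsq X) (cross d X)).
  assert (Hwd : lin w d = 0).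
  { unfold w. rewrite lin_vscall, lin_comm. unfold X. rewrite lin_cross1. ring. }
  assert (Hwp : lin w p = -1).
  { unfold w. rewrite lin_vscall, lin_comm. unfold X. rewrite triple. fold X. field. lra. }
  apply (pos_shear l _ _ w d).
  - unfold d. rewrite lin_vadd, Hlp, Hlu0. ring.
  - exact Hwd.
  - intros u [t ->]. unfold U_line. rewrite (linmap_scal (shear w d)) by apply linmap_shear.
    rewrite lin_vscal. unfold shear. rewrite lin_vadd, lin_vscal, Hwp. unfold d. rewrite lin_vadd, Hku0. ring.
Qed.

Definition reachb (i j : faceA) : bool :=
  match i, j with
  | L0, L0 | L1, L1 | L2, L2 | L3, L3 | L4, L4 => true
  | Fzero, _ => true
  | L1, L0 | L2, L0 | L3, L0 | L4, L0 | L3, L1 | L3, L2 | L4, L2 => true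
  | _, _ => false
  end.

Lemma crt_reach i j : clos_refl_trans faceA genA i j -> reachb i j = true.
Proof.
  induction 1.
  - destruct x, y; simpl in H; try contradiction; reflexivity.
  - destruct x; reflexivity.
  - destruct x, y, z; simpl in *; congruence.
Qed.

Lemma reach_crt i j : reachb i j = true -> clos_refl_trans faceA genA i j.
Proof.
  destruct i, j; simpl; intros H; try discriminate; try apply rt_refl; try (apply rt_step; exact I).
  - apply rt_trans with L1; apply rt_step; exact I.
  - apply rt_trans with L2; apply rt_step; exact I.
  - apply rt_trans with L4; [apply rt_step; exact I|]. apply rt_trans with L2; apply rt_step; exact I.
  - apply rt_trans with L3; apply rt_step; exact I.
  - apply rt_trans with L4; apply rt_step; exact I.
Qed.

Lemma allsub (l k p q : vec)
  (hl : l <> vzero) (hk : k <> vzero)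
  (hlk : ~ (exists c : R, k = vscal c l))
  (hp : p <> vzero) (hpl : lin l p = 0)
  (hql : lin l q <> 0) (i j : faceA) :
  reachb i j = true -> face_sub (faceA_of l k p q i) (faceA_of l k p q j).
Proof.
  destruct i, j; simpl; intros H; try discriminate; try apply refl_sub; try apply zero_src;
    try (apply pos_id; intros u Hu; destruct Hu; fail).
  - apply P31; auto.
  - apply P32; auto.
  - apply pos_id. intros u [t ->]. unfold U_line. rewrite lin_vscal, hpl; ring.
Qed.

Lemma allneg (l k p q : vec)
  (hl : l <> vzero) (hk : k <> vzero)
  (hlk : ~ (exists c : R, k = vscal c l))
  (hp : p <> vzero) (hpl : lin l p = 0)
  (hql : lin l q <> 0) (i j : faceA) :
  reachb i j = false -> ~ face_sub (faceA_of l k p q i) (faceA_of l k p q j).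
Proof.
  assert (hq : q <> vzero) by (apply (nz_of_lin l); auto).
  pose proof (clk l k hl hlk) as Hc.
  assert (Hc' : cross k l <> vzero).
  { intros E; apply Hc. rewrite cross_anti, E. apply veq; vsimpl; ring. }
  set (u0 := cross l k).
  assert (Hku0 : lin k u0 = 0) by apply lin_cross2.
  assert (Hlu0 : lin l u0 = 0) by apply lin_cross1.
  set (bk := cross k (cross l k)). set (bl := cross l (cross k l)).
  assert (A1 : lin k bk = 0) by apply lin_cross1. assert (A2 : lin l bk = nsq (cross l k)) by apply triple.
  assert (A3 : lin l bl = 0) by apply lin_cross1. assert (A4 : lin k bl = nsq (cross k l)) by apply triple.
  pose proof (nsq_pos _ Hc). pose proof (nsq_pos _ Hc').
  assert (Hbk : lin l bk <> 0) by lra.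
  destruct i, j; simpl; intros HH; try discriminate.
  - apply (N0_pt l _ q); auto. apply upt.
  - apply (N0_pt l _ p); auto. apply upt.
  - apply (N0_pt l _ u0); auto.
  - apply (N0_pt l _ u0); auto.
  - apply (zero_target l _ nsq form2_nsq nsq_ge0); [intros u []|].
    destruct (Hg_nsq l k Hc) as (b & _ & h1 & h2). eauto.
  - apply (N1_pt l q _ p); auto. apply upt.
  - apply (N1_pt l q _ u0); auto.
  - apply (N1_pt l q _ u0); auto.
  - apply (zero_target l _ _ (form2_gcr q) (fun a => nsq_ge0 (cross a q)) (gcr_vanish q)).
    destruct (Hg_q l q hql k Hc) as (b & _ & h1 & h2). eauto.
  - apply (N2_pt l p _ q); auto. apply upt.
  - apply (N2_pt l p _ bk); auto.
  - apply (N24 l k p); auto.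
  - apply (zero_target l _ _ (form2_gcr p) (fun a => nsq_ge0 (cross a p)) (gcr_vanish p)).
    destruct (Hg_p l p hp hpl k Hc) as (b & _ & h1 & h2). eauto.
  - apply N34; auto.
  - apply (zero_target l _ _ (form2_gl k) (gl_ge0 k)).
    + intros u Hu. unfold U_line in Hu. rewrite Hu; ring.
    + exists (vadd bk bl). rewrite !lin_vadd, A1, A2, A3, A4. split; [lra|]. apply pow_nonzero; lra.
  - apply (N4_pt l _ q); auto. apply upt.
  - apply (N4_pt l _ bk); auto.
  - apply (zero_target l _ _ (form2_gl l) (gl_ge0 l)).
    + intros u Hu. unfold U_line in Hu. rewrite Hu; ring.
    + destruct (Hg_gl l k Hc) as (b & _ & h1 & h2). eauto.
Qed.

Theorem mainTheorem19 (l k p q : vec)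
  (hl : l <> vzero) (hk : k <> vzero)
  (hlk : ~ (exists c : R, k = vscal c l))
  (hp : p <> vzero) (hpl : lin l p = 0)
  (hql : lin l q <> 0) :
  (forall i j : faceA,
     face_sub (faceA_of l k p q i) (faceA_of l k p q j) <-> clos_refl_trans faceA genA i j) /\
  ~ face_sub (faceA_of l k p q L1) (faceA_of l k p q L2) /\
  ~ face_sub (faceA_of l k p q L2) (faceA_of l k p q L1) /\
  ~ face_sub (faceA_of l k p q L3) (faceA_of l k p q L4) /\
  ~ face_sub (faceA_of l k p q L4) (faceA_of l k p q L3) /\
  ~ face_sub (faceA_of l k p q L4) (faceA_of l k p q L1).
Proof.
  split.
  - intros i j. split.
    + intros H. apply reach_crt. destruct (reachb i j) eqn:E; auto.
      exfalso. apply (allneg l k p q hl hk hlk hp hpl hql i j E H).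
    + intros H. apply allsub; auto. apply crt_reach; auto.
  - repeat split; apply allneg; auto.
Qed.
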